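(* Let $G$ be a graph of order $n\ge 9$. If $\tau(G)\le \frac{n}{2}$, then $\beta_p(G)\le n-3$.
   Context: All graphs are finite, simple, undirected and connected. Two vertices $u,v$ are twins if $N(u)\setminus\{v\}=N(v)\setminus\{u\}$; this is an equivalence relation whose classes are called twin classes, and the twin number $\tau(G)$ is the maximum cardinality of a twin class. For a partition $\Pi=\{S_1,\dots,S_k\}$ of $V(G)$, $r(u|\Pi)=(d(u,S_1),\dots,d(u,S_k))$ with $d(u,S)=\min_{w\in S}d(u,w)$; $\Pi$ is locating if $r(u|\Pi)\ne r(v|\Pi)$ for all distinct $u,v$; $\beta_p(G)$ (partition dimension) is the minimum size of a locating partition. *)

(* Defs.v *)
From mathcomp Require Import all_boot all_order.
Set Implicit Arguments. Unset Strict Implicit. Unset Printing Implicit Defensive.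

Section Graph.
Variables (T : finType) (e : rel T).

Definition simple_graph := symmetric e /\ irreflexive e.
Definition connected_graph := forall u v : T, connect e u v.

Definition nbhd (u : T) : {set T} := [set w | e u w].

Fixpoint ball (k : nat) (u : T) : {set T} :=
  match k with
  | 0 => [set u]
  | k'.+1 => ball k' u :|: [set y | [exists x in ball k' u, e x y]]
  end.

(* graph distance: least k with v in ball k u (distances in a connected
   graph on #|T| vertices are < #|T|; index in iota 0 _ equals the value) *)
Definition gdist (u v : T) : nat := find (fun k => v \in ball k u) (iota 0 #|T|).

Definition dist_set (u : T) (S : {set T}) : nat :=
  \big[minn/#|T|]_(w in S) gdist u w.

Definition twins (u v : T) : bool := (nbhd u :\ v) == (nbhd v :\ u).

Definition twin_class (u : T) : {set T} := [set v | twins u v].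

Definition twin_number : nat := \max_(u : T) #|twin_class u|.

(* locating partition: r(u|P) <> r(v|P) for distinct u v, i.e. some class
   S in P distinguishes them by distance *)
Definition locating (P : {set {set T}}) : bool :=
  partition P [set: T] &&
  [forall u : T, forall v : T,
     (u != v) ==> [exists S in P, dist_set u S != dist_set v S]].

Definition partition_dim : nat :=
  \big[minn/#|T|.+1]_(P : {set {set T}} | locating P) #|P|.

End Graph.

(* Main.v *)
Require Import Defs.
From mathcomp Require Import all_boot all_order.
From mathcomp Require Import zify.
Set Implicit Arguments. Unset Strict Implicit. Unset Printing Implicit Defensive.

Section Part1.
Variables (T : finType) (e : rel T).
Hypothesis esym : symmetric e.
Hypothesis eirr : irreflexive e.
Hypothesis n2 : 2 <= #|T|.

Lemma ball1E u v : (v \in ball e 1 u) = (v == u) || e u v.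
Proof.
rewrite /= !inE; congr (_ || _).
apply/existsP/idP => [[x /andP[]]|H]; first by rewrite inE => /eqP ->.
by exists u; rewrite inE eqxx.
Qed.

Lemma gdist0 u : gdist e u u = 0.
Proof. by rewrite /gdist; move: n2; case: #|T| => // n _ /=; rewrite inE eqxx. Qed.

Lemma gdist_neq0 u v : u != v -> gdist e u v != 0.
Proof.
move=> uv; have vu : (v == u) = false by rewrite eq_sym (negbTE uv).
by rewrite /gdist; move: n2; case: #|T| => // n _ /=; rewrite inE vu.
Qed.

Lemma gdist1 u v : u != v -> (gdist e u v == 1) = e u v.
Proof.
move=> uv; have vu : (v == u) = false by rewrite eq_sym (negbTE uv).
rewrite /gdist; move: n2; case: #|T| => [|[|n]] // _.
rewrite /= inE vu /=.
have := ball1E u v; rewrite /= => ->; rewrite vu /=.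
by case: (e u v).
Qed.

Lemma dist_set0 u (S : {set T}) : u \in S -> dist_set e u S = 0.
Proof.
move=> uS; apply/eqP; rewrite -leqn0 -(gdist0 u).
rewrite /dist_set -big_filter.
have : u \in [seq x <- index_enum T | x \in S] by rewrite mem_filter uS mem_index_enum.
elim: [seq x <- index_enum T | x \in S] => [//|a s IH]; rewrite inE big_cons => /orP[/eqP <-|us].
  exact: geq_minl.
exact: leq_trans (geq_minr _ _) (IH us).
Qed.

Lemma dist_set_pos u (S : {set T}) : u \notin S -> 0 < dist_set e u S.
Proof.
move=> uS; rewrite /dist_set; apply: (big_ind (fun x => 0 < x)).
- by apply: leq_trans n2.
- by move=> x y; rewrite leq_min => -> ->.
move=> w wS; rewrite lt0n gdist_neq0 //; apply: contraNneq uS => ->; exact: wS.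
Qed.

Lemma dist_set1 u w : dist_set e u [set w] = minn (gdist e u w) #|T|.
Proof.
rewrite /dist_set -big_filter.
have -> : [seq x <- index_enum T | x \in [set w]] = [:: w].
  rewrite (eq_filter (a2 := pred1 w)); last by move=> z; rewrite inE.
  by rewrite filter_pred1_uniq ?index_enum_uniq ?mem_index_enum.
by rewrite big_cons big_nil.
Qed.

Definition config := exists x1 y1 x2 y2 x3 y3 w1 w2 w3 : T,
  uniq [:: x1; y1; x2; y2; x3; y3] /\
  [/\ w1 \notin [:: x1; y1; x2; y2; x3; y3],
      w2 \notin [:: x1; y1; x2; y2; x3; y3] &
      w3 \notin [:: x1; y1; x2; y2; x3; y3]] /\
  [/\ e w1 x1 != e w1 y1, e w2 x2 != e w2 y2 & e w3 x3 != e w3 y3].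

Lemma minn1 g : (minn g #|T| == 1) = (g == 1).
Proof. by apply/eqP/eqP; lia. Qed.

Lemma sep_dist w x y : w != x -> w != y -> e w x != e w y ->
  dist_set e x [set w] != dist_set e y [set w].
Proof.
move=> wx wy exy; rewrite !dist_set1; apply/negP => /eqP E.
have : (minn (gdist e x w) #|T| == 1) = (minn (gdist e y w) #|T| == 1) by rewrite E.
rewrite !minn1 !gdist1 1?eq_sym // 1?eq_sym // ![e _ w]esym => H.
by rewrite H eqxx in exy.
Qed.

Lemma bigmin_le (I : eqType) (s : seq I) (F : I -> nat) d i :
  i \in s -> \big[minn/d]_(j <- s) F j <= F i.
Proof.
elim: s => [//|a s IH]; rewrite inE big_cons => /orP[/eqP <-|us].
  exact: geq_minl.
exact: leq_trans (geq_minr _ _) (IH us).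
Qed.

Lemma pdim_le (P : {set {set T}}) : locating e P -> partition_dim e <= #|P|.
Proof.
move=> HP; rewrite /partition_dim -big_filter; apply: bigmin_le.
by rewrite mem_filter HP mem_index_enum.
Qed.

Ltac splitall := repeat match goal with H : is_true (_ && _) |- _ =>
  let a := fresh "h" in let b := fresh "h" in case/andP: H => a b end.

Ltac neqxx := match goal with H : is_true (?a != ?a) |- _ => by rewrite eqxx in H end.
Ltac neqP := match goal with H : ?a <> ?a |- _ => by case: (H erefl) end.
Ltac bcontra := apply/idP/idP => /eqP E; subst; neqxx.

Lemma config_pdim : config -> partition_dim e <= #|T| - 3.
Proof.
case=> [x1 [y1 [x2 [y2 [x3 [y3 [w1 [w2 [w3 [U [[W1 W2 W3] [S1 S2 S3]]]]]]]]]]]].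
pose six := [:: x1; y1; x2; y2; x3; y3].
pose r v := if v == y1 then x1 else if v == y2 then x2 else if v == y3 then x3 else v.
pose Px x := [set y in [set: T] | r x == r y].
pose P := preim_partition r [set: T].
have partP : partition P [set: T] := preim_partitionP r [set: T].
have PxP x : Px x \in P by apply: imset_f; rewrite inE.
have U' := U; move: U'; rewrite /= !inE !negb_or => Hs; splitall.
have rE v : v \notin [:: y1; y2; y3] -> r v = v.
  by rewrite !inE !negb_or => /and3P[a b c]; rewrite /r (negbTE a) (negbTE b) (negbTE c).
have PW w : w \notin six -> Px w = [set w].
  rewrite !inE !negb_or => Hw; splitall; apply/setP => z; rewrite !inE.
  rewrite (rE w); last by rewrite !inE !negb_or; apply/and3P.
  rewrite andTb /r; case: (z =P y1) => [->|m1]; first bcontra.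
  case: (z =P y2) => [->|m2]; first bcontra.
  case: (z =P y3) => [->|m3]; first bcontra.
  by rewrite eq_sym.
have good w a b : w \notin six -> a \in six -> b \in six -> e w a != e w b ->
    exists2 S, S \in P & dist_set e a S != dist_set e b S.
  move=> Hw Ha Hb Hab; exists (Px w) => //; rewrite PW //; apply: sep_dist => //.
    by apply/eqP => E; rewrite E Ha in Hw.
  by apply/eqP => E; rewrite E Hb in Hw.
have main u v : u != v -> exists2 S, S \in P & dist_set e u S != dist_set e v S.
  move=> uv; case: (eqVneq (r u) (r v)) => [ruv|ruv]; last first.
    exists (Px u) => //; rewrite dist_set0 ?inE ?eqxx // eq_sym -lt0n.
    by apply: dist_set_pos; rewrite !inE.
  move: ruv; rewrite /r.
  repeat (case: eqP => [?|?]; [try subst|]); move=> E; try subst;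
  try solve [neqxx | (apply: (good w1); [by [] | by rewrite /six !inE eqxx ?orbT | by rewrite /six !inE eqxx ?orbT | by rewrite // eq_sym])
    | (apply: (good w2); [by [] | by rewrite /six !inE eqxx ?orbT | by rewrite /six !inE eqxx ?orbT | by rewrite // eq_sym])
    | (apply: (good w3); [by [] | by rewrite /six !inE eqxx ?orbT | by rewrite /six !inE eqxx ?orbT | by rewrite // eq_sym]) ].
have loc : locating e P.
  rewrite /locating partP /=; apply/forallP => u; apply/forallP => v; apply/implyP => uv.
  have [S SP HS] := main u v uv; apply/existsP; exists S; by rewrite SP HS.
apply: leq_trans (pdim_le loc) _.
have -> : P = (fun t => [set y in [set: T] | t == r y]) @: (r @: [set: T]) by rewrite -imset_comp.
apply: leq_trans (leq_imset_card _ _) _.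
have sub : r @: [set: T] \subset ~: [set y1; y2; y3].
  apply/subsetP => _ /imsetP[v _ ->]; rewrite /r.
  case: (v =P y1) => [_|a1]; [|case: (v =P y2) => [_|a2]; [|case: (v =P y3) => [_|a3]]];
  rewrite !inE -!orbA; apply/negP => /or3P [] /eqP E; subst; first [neqxx | exact: (a1 erefl) | exact: (a2 erefl) | exact: (a3 erefl)].
have c3 : 2 < #|[set y1; y2; y3]|.
  apply/card_gt2P; exists y1, y2, y3; rewrite !inE !eqxx ?orbT; split=> //; split => //.
  by rewrite eq_sym.
apply: leq_trans (subset_leq_card sub) _; rewrite -(cardsC [set y1; y2; y3]).
by rewrite addnC -addnBA // leq_addr.
Qed.



End Part1.


Ltac neqxx' := match goal with H : is_true (?a != ?a) |- _ => by rewrite eqxx in H end.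
Ltac splitall' := repeat match goal with H : is_true (_ && _) |- _ =>
  let a := fresh "h" in let b := fresh "h" in case/andP: H => a b end.

Section Core.
Variables (T : finType) (e : rel T).
Hypothesis esy : symmetric e.
Hypothesis eirr : irreflexive e.
Variable M : T -> {set T}.
Variable h : T -> bool.
Hypothesis Mirr : forall w, w \notin M w.
Hypothesis Mcard : forall w, #|M w| <= 2.
Hypothesis eM : forall w z, z != w -> e w z = (z \in M w) (+) h w.
Hypothesis n9 : 9 <= #|T|.

Lemma DT (W D E : {set T}) :
  2 < #|D| -> 2 < #|E| ->
  (forall x, x \in W -> x \in D -> False) ->
  (forall x, x \in W -> x \in E -> False) ->
  (forall d, d \in D -> exists2 w, w \in W & d \in M w) ->
  (forall z w, z \in E -> w \in W -> z \notin M w) -> config e.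
Proof.
move=> cD cE WD WE DW EW.
have [d1 [d2 [d3 [[D1 D2 D3] [n12 n23 n31]]]]] := card_gt2P cD.
have [z1 [z2 [z3 [[E1 E2 E3] [m12 m23 m31]]]]] := card_gt2P cE.
have [w1 Wa Ma] := DW _ D1.
have [w2 Wb Mb] := DW _ D2.
have [w3 Wc Mc] := DW _ D3.
have DE x : x \in D -> x \in E -> False.
  by move=> /DW [w Ww Mw] xE; move: (EW _ _ xE Ww); rewrite Mw.
have sep w d z : w \in W -> d \in D -> z \in E -> d \in M w -> e w d != e w z.
  move=> Ww Dd Ez Mwd; rewrite !eM;
    try (apply/eqP => E0; subst; first [exact: (WE _ Ww Ez) | exact: (WD _ Ww Dd)]).
  by rewrite Mwd (negbTE (EW _ _ Ez Ww)); case: (h w).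
exists d1, z1, d2, z2, d3, z3, w1, w2, w3.
split; [|split; [split|split]].
- rewrite /= !inE !negb_or !andbT -?andbA; repeat (apply/andP; split);
  apply/eqP => E0; subst; first [neqxx' | exact: (DE _ D1 E1) | exact: (DE _ D1 E2)
   | exact: (DE _ D1 E3) | exact: (DE _ D2 E1) | exact: (DE _ D2 E2) | exact: (DE _ D2 E3)
   | exact: (DE _ D3 E1) | exact: (DE _ D3 E2) | exact: (DE _ D3 E3)
   | exact: (DE _ D1 E1)].
- rewrite !inE !negb_or -?andbA; repeat (apply/andP; split);
  apply/eqP => E0; subst; first [exact: (WD _ Wa D1) | exact: (WD _ Wa D2) | exact: (WD _ Wa D3)
    | exact: (WE _ Wa E1) | exact: (WE _ Wa E2) | exact: (WE _ Wa E3)].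
- rewrite !inE !negb_or -?andbA; repeat (apply/andP; split);
  apply/eqP => E0; subst; first [exact: (WD _ Wb D1) | exact: (WD _ Wb D2) | exact: (WD _ Wb D3)
    | exact: (WE _ Wb E1) | exact: (WE _ Wb E2) | exact: (WE _ Wb E3)].
- rewrite !inE !negb_or -?andbA; repeat (apply/andP; split);
  apply/eqP => E0; subst; first [exact: (WD _ Wc D1) | exact: (WD _ Wc D2) | exact: (WD _ Wc D3)
    | exact: (WE _ Wc E1) | exact: (WE _ Wc E2) | exact: (WE _ Wc E3)].
- exact: sep.
- exact: sep.
- exact: sep.
Qed.


Lemma cardU_le (A B : {set T}) : #|A :|: B| <= #|A| + #|B|.
Proof. by rewrite cardsU leq_subr. Qed.

Lemma cardC_ge (A : {set T}) k : #|A| <= k -> #|T| - k <= #|~: A|.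
Proof. move=> Ak; rewrite -(cardsC A); move: Ak; clear; lia. Qed.

Lemma le1_eq (A : {set T}) x y : #|A| <= 1 -> x \in A -> y \in A -> x = y.
Proof. by move=> /card_le1P H xA yA; move: (H x xA y); rewrite yA inE => /esym/eqP. Qed.

Lemma le2_three (A : {set T}) x y z : #|A| <= 2 -> x \in A -> y \in A -> z \in A ->
  x != y -> y != z -> z != x -> False.
Proof.
move=> c xA yA zA xy yz zx; suff : 2 < #|A| by rewrite ltnNge c.
by apply/card_gt2P; exists x, y, z.
Qed.

Lemma card3 (x y z : T) : x != y -> y != z -> z != x -> 2 < #|[set x; y; z]|.
Proof. by move=> xy yz zx; apply/card_gt2P; exists x, y, z; rewrite !inE !eqxx ?orbT. Qed.

Notation TT := (\bigcup_(w : T) M w).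

Lemma inTT t s : t \in M s -> t \in TT.
Proof. by move=> tM; apply/bigcupP; exists s. Qed.

Lemma twins_big : #|TT| <= 4 -> exists u, #|T| - 4 <= #|twin_class e u|.
Proof.
move=> small; have cO := cardC_ge small.
have [o oO] : exists o, o \in ~: TT.
  by apply/set0Pn; rewrite -card_gt0; move: cO n9; clear; lia.
exists o; apply: leq_trans cO (subset_leq_card _); apply/subsetP => o' o'O.
rewrite inE /twins; apply/eqP/setP => z; rewrite !inE.
have key x z0 : x \in ~: TT -> z0 != x -> e x z0 = h z0.
  move=> xO zx; rewrite esy eM 1?eq_sym //.
  suff -> : (x \in M z0) = false by [].
  by apply/negbTE; move: xO; rewrite inE; apply: contraNN; apply: inTT.
case: (eqVneq z o) => [->|zo]; first by rewrite eirr andbF.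
case: (eqVneq z o') => [->|zo']; first by rewrite ?eqxx eirr ?andbF.
by rewrite (key o) // (key o').
Qed.


Lemma cards2_le (x y : T) : #|[set x; y]| <= 2.
Proof. by rewrite cards2; case: (_ != _). Qed.


Lemma card4U (A B C D : {set T}) : #|A :|: B :|: C :|: D| <= #|A| + #|B| + #|C| + #|D|.
Proof.
apply: leq_trans (cardU_le _ _) _; rewrite leq_add2r.
apply: leq_trans (cardU_le _ _) _; rewrite leq_add2r.
exact: cardU_le.
Qed.

Lemma card3U' (A B C : {set T}) : #|A :|: B :|: C| <= #|A| + #|B| + #|C|.
Proof.
apply: leq_trans (cardU_le _ _) _; rewrite leq_add2r; exact: cardU_le.
Qed.

Lemma card3U (A B C : {set T}) : #|A :|: B :|: C| <= #|A| + #|B| + #|C|.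
Proof.
apply: leq_trans (cardU_le _ _) _; rewrite leq_add2r; exact: cardU_le.
Qed.

Ltac dest := repeat match goal with
 | H : is_true (_ || _) |- _ => case/orP: H => H
 | H : is_true (?x == ?y) |- _ => move/eqP: H => H; try subst
 end.

Ltac fin := first [ neqxx'
  | match goal with H : is_true (_ \in _) |- _ => by move: H; rewrite (negbTE (Mirr _)) end
  | match goal with H : is_true (~~ _) |- _ => by move: H; rewrite ?inE ?eqxx ?orbT end
  | match goal with H : ?a <> ?a |- _ => by case: (H erefl) end ].

Lemma stepA b : #|M b| = 2 -> 4 < #|TT| -> config e.
Proof.
move=> Mb2 big.
have [a [c [ac Mb]]] : exists a c, a != c /\ M b = [set a; c] by apply/cards2P/eqP.
have aMb : a \in M b by rewrite Mb !inE eqxx.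
have cMb : c \in M b by rewrite Mb !inE eqxx orbT.
have ab : a != b by apply/eqP => E0; move: (Mirr b); rewrite -{1}E0 aMb.
have cb : c != b by apply/eqP => E0; move: (Mirr b); rewrite -{1}E0 cMb.
have n6 : 2 < #|T| - 6 by move: n9; clear; lia.
case: (boolP [exists u, exists v, [&& u \notin [set a; b; c], v \in M u & v \notin [set a; b; c]]])
  => [/existsP [u /existsP [v /and3P [uK vMu vK]]]|nA1].
  apply: (DT (W := [set b; u]) (D := [set a; c; v]) (E := ~: ([set b; u] :|: M b :|: M u))).
  - apply: card3 => //; apply/eqP => E0; subst; fin.
  - apply: leq_trans n6 (cardC_ge _); apply: leq_trans (card3U _ _ _) _.
    by have := cards2_le b u; have := Mcard b; have := Mcard u; clear; lia.
  - by move=> x; rewrite !inE => H1 H2; dest; fin.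
  - by move=> x; rewrite !inE => H1 H2; dest; fin.
  - move=> d; rewrite !inE => H1; dest; [exists b | exists b | exists u]; rewrite ?inE ?eqxx ?orbT //.
  - by move=> z w; rewrite !inE => H1 H2; dest; apply: contra H1 => ->; rewrite ?orbT.
have cards3_le (x y z : T) : #|[set x; y; z]| <= 3.
  by apply: leq_trans (card3U _ _ _) _; rewrite !cards1.
have A1n u v : u \notin [set a; b; c] -> v \in M u -> v \in [set a; b; c].
  move=> uK vMu; apply/negPn/negP => vK; move/negP: nA1; apply.
  by apply/existsP; exists u; apply/existsP; exists v; rewrite uK vMu vK.
pose Z := (M a :|: M c) :\: [set a; c].
case: (leqP #|Z| 2) => [Zle|Zgt]; last first.
  apply: (DT (W := [set a; c]) (D := Z) (E := ~: ([set a; c] :|: M a :|: M c))) => //.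
  - apply: leq_trans n6 (cardC_ge _); apply: leq_trans (card3U _ _ _) _.
    by have := cards2_le a c; have := Mcard a; have := Mcard c; clear; lia.
  - by move=> x xW; rewrite /Z in_setD xW.
  - by move=> x; rewrite !inE => H1 H2; dest; fin.
  - move=> d; rewrite /Z in_setD !in_setU => /andP [_ /orP [dA|dC]]; [exists a|exists c];
    by rewrite ?inE ?eqxx ?orbT.
  - by move=> z w; rewrite !inE => H1 H2; dest; apply: contra H1 => ->; rewrite ?orbT.
pose Y := (M a :|: M c) :\: [set a; b; c].
have YZ : Y \subset Z.
  apply/subsetP => y; rewrite !inE => /andP [H1 H2]; rewrite H2 andbT.
  by apply: contra H1 => /orP [] ->; rewrite ?orbT.
have Yle : #|Y| <= 2 := leq_trans (subset_leq_card YZ) Zle.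
have TTsub : TT \subset [set a; b; c] :|: Y.
  apply/subsetP => t /bigcupP [s _ tMs].
  case: (boolP (s \in [set a; b; c])) => sK; last by rewrite in_setU (A1n _ _ sK tMs).
  rewrite in_setU; case: (boolP (t \in [set a; b; c])) => //= tK.
  rewrite /Y in_setD tK /= in_setU.
  move: sK; rewrite !inE => sK; dest; rewrite ?tMs ?orbT //.
  by move: tMs tK; rewrite Mb !inE => /orP [] ->; rewrite ?orbT.
have Yge : 2 <= #|Y|.
  have := subset_leq_card TTsub; have := cardU_le [set a; b; c] Y.
  by have := cards3_le a b c; move: big; clear; lia.
have bY : b \notin Y by rewrite !inE eqxx orbT.
have bZ : b \notin M a :|: M c.
  apply/negP => bac.
  have : b |: Y \subset Z.
    apply/subsetP => y; rewrite in_setU1 => /orP [/eqP ->|yY].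
      by rewrite in_setD bac andbT !inE negb_or eq_sym ab eq_sym cb.
    exact: (subsetP YZ).
  move/subset_leq_card; rewrite cardsU1 bY; move: Yle Zle Yge; clear; lia.
have bTT : b \in TT.
  apply: contraT => bT.
  have : TT \subset [set a; c] :|: Y.
    apply/subsetP => t tT; move: (subsetP TTsub t tT); rewrite !inE.
    move=> H; case: (eqVneq t b) => [E0|tb]; first by move: bT; rewrite -E0 tT.
    by move: H; rewrite (negbTE tb) orbF.
  move/subset_leq_card; have := cardU_le [set a; c] Y; have := cards2_le a c.
  by move: big Yle; clear; lia.
have YK y : y \in Y -> y \notin [set a; b; c] by rewrite /Y in_setD => /andP [].
have A3 u : b \in M u -> u \notin Y -> config e.
  move=> bMu uY.
  have ub : u != b by apply/eqP => E0; subst; fin.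
  have ua : u != a by apply/eqP => E0; subst; move: bZ; rewrite in_setU bMu.
  have uc : u != c by apply/eqP => E0; subst; move: bZ; rewrite in_setU bMu orbT.
  have uK : u \notin [set a; b; c] by rewrite !inE (negbTE ua) (negbTE ub) (negbTE uc).
  apply: (DT (W := [set a; c; u]) (D := b |: Y) (E := ~: ([set a; c; u] :|: Z :|: [set b]))).
  - by rewrite cardsU1 bY; move: Yge; clear; lia.
  - apply: leq_trans n6 (cardC_ge _); apply: leq_trans (card3U _ _ _) _.
    by have := cards3_le a c u; rewrite cards1; move: Zle; clear; lia.
  - move=> x xW; rewrite in_setU1 => /orP [/eqP E0|xY]; first by move: xW; rewrite E0 !inE
      ![b == _]eq_sym (negbTE ab) (negbTE cb) (negbTE ub).
    move: (YK _ xY) xW; rewrite !inE => H1 H2; dest; rewrite ?eqxx ?orbT // in H1.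
    by rewrite xY in uY.
  - by move=> x; rewrite !inE => H1 H2; dest; fin.
  - move=> d; rewrite in_setU1 => /orP [/eqP ->|dY]; first by exists u; rewrite ?inE ?eqxx ?orbT.
    move: dY; rewrite /Y in_setD !in_setU => /andP [_ /orP [dA|dC]]; [exists a|exists c];
    by rewrite ?inE ?eqxx ?orbT.
  - move=> z w zE; rewrite !inE => H; dest.
    + apply/negP => zM; move: zE; rewrite /Z !inE zM ?orbT /=.
      by case: (z == a); case: (z == c); rewrite ?orbT.
    + apply/negP => zM; move: zE; rewrite /Z !inE zM ?orbT /=.
      by case: (z == a); case: (z == c); rewrite ?orbT.
    + apply/negP => zM; move: (A1n _ _ uK zM) zE; rewrite !inE.
      by case/orP => [/orP []|] ->; rewrite ?orbT.
case/bigcupP: bTT => u _ bMu.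
case: (boolP (u \in Y)) => uY; last exact: A3 u bMu uY.
case: (boolP [exists u', (u' \in ~: ([set a; b; c] :|: Y)) && (b \in M u')])
  => [/existsP [u' /andP [u'R bMu']]|nA4].
  by apply: (A3 u' bMu'); move: u'R; rewrite !inE negb_or => /andP [].
exfalso.
have sub : ~: ([set a; b; c] :|: Y) \subset M u.
  apply/subsetP => u' u'R.
  have bMu' : b \notin M u'.
    by apply/negP => H; move/negP: nA4; apply; apply/existsP; exists u'; rewrite u'R H.
  move: u'R; rewrite in_setC in_setU negb_or => /andP [u'K u'Y].
  have u'b : u' != b by apply: contraNneq u'K => ->; rewrite !inE eqxx ?orbT.
  have u'Mb : u' \notin M b.
    by rewrite Mb !inE negb_or; move: u'K; rewrite !inE !negb_or => /andP [/andP [-> _] ->].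
  have uMb : u \notin M b.
    by rewrite Mb !inE negb_or; move: (YK _ uY); rewrite !inE !negb_or => /andP [/andP [-> _] ->].
  have u'u : u' != u by apply: contraNneq u'Y => ->.
  have ub : u != b by apply: contraNneq (YK _ uY) => ->; rewrite !inE eqxx ?orbT.
  have uMu' : u \notin M u' by apply: contra (YK _ uY); exact: A1n.
  have H1 := eM u'b; have H2 := eM (w := u') (z := b); have H3 := eM u'u.
  have H4 := eM (w := u') (z := u); have H5 := eM (w := u) (z := b); have H6 := eM ub.
  rewrite eq_sym in H2; rewrite eq_sym in H4; rewrite eq_sym in H5.
  move: (H2 u'b) (H4 u'u) (H5 ub) H1 H3 H6.
  rewrite (negbTE bMu') (negbTE u'Mb) (negbTE uMu') (negbTE uMb) bMu.
  rewrite (esy u' b) (esy u' u) (esy u b).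
  move=> E1 E2 E3 E4 E5 E6; move: E4 E5 E6; rewrite E1 E2 E3.
  by case: (u' \in M u); case: (h u); case: (h b); case: (h u').
have := subset_leq_card sub; have := cardC_ge (k := 5) (A := [set a; b; c] :|: Y).
have := cardU_le [set a; b; c] Y; have := cards3_le a b c; have := Mcard u.
by move: Yle n9; clear; lia.
Qed.




Lemma cardsD_ge (A B : {set T}) : #|A| - #|B| <= #|A :\: B|.
Proof.
rewrite cardsD; apply: leq_sub2l; apply: subset_leq_card; exact: subsetIr.
Qed.

Lemma xh (p q r : bool) : q != r -> p (+) r = false (+) q -> p.
Proof. by case: p; case: q; case: r. Qed.
Lemma xh2 (p q r : bool) : q = r -> true (+) q = p (+) r -> p.
Proof. by case: p; case: q; case: r. Qed.

Lemma stepB (beta : bool) : (forall w, #|M w| <= 1) ->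
  4 < #|[set v | h v == beta]| -> 4 < #|TT| -> config e.
Proof.
move=> M1 bigA big.
have n6 : 2 < #|T| - 6 by move: n9; clear; lia.
have ne1 x y z : y \in M x -> z \in M x -> y != z -> False.
  by move=> yM zM; rewrite (le1_eq (M1 x) yM zM) eqxx.
have hB b x : h b != beta -> h x == beta -> x \notin M b -> b \in M x.
  move=> hb hx xMb; have bx : b != x by apply: contraNneq hb => ->.
  have := esy x b; rewrite (eM bx) (eM (w := b) (z := x)) 1?eq_sym // (negbTE xMb).
  by rewrite (eqP hx); apply: xh hb.
have oneB b1 b2 : h b1 != beta -> h b2 != beta -> b1 = b2.
  move=> hb1 hb2; apply/eqP/negPn/negP => b12.
  have : 0 < #|[set v | h v == beta] :\: (M b1 :|: M b2)|.
    apply: leq_trans (cardsD_ge _ _); have := cardU_le (M b1) (M b2).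
    by have := M1 b1; have := M1 b2; move: bigA; clear; lia.
  case/card_gt0P => l; rewrite !inE negb_or => /andP [/andP [l1 l2] hl].
  by apply: (ne1 l b1 b2 (hB _ _ hb1 hl l1) (hB _ _ hb2 hl l2)).
case: (boolP [exists b, h b != beta]) => [/existsP [b0 hb0]|allB].
  exfalso.
  have sub : TT \subset b0 |: M b0.
    apply/subsetP => t /bigcupP [s _ tMs]; rewrite in_setU1.
    case: (eqVneq t b0) => //= tb0; case: (eqVneq s b0) => [<- //|sb0].
    have hs : h s == beta by apply/negPn/negP => hs; move: sb0; rewrite (oneB _ _ hs hb0) eqxx.
    have ht : h t == beta by apply/negPn/negP => ht; move: tb0; rewrite (oneB _ _ ht hb0) eqxx.
    have ts : t != s by apply/eqP => E0; subst; fin.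
    have sMt : s \in M t.
      have := esy s t; rewrite (eM ts) (eM (w := t) (z := s)) 1?eq_sym // tMs.
      by apply: xh2; rewrite (eqP hs) (eqP ht).
    case: (boolP (s \in M b0)) => sMb.
      case: (boolP (t \in M b0)) => tMb; first by case: (ne1 _ _ _ sMb tMb); rewrite eq_sym.
      by case: (ne1 _ _ _ sMt (hB _ _ hb0 ht tMb)); apply: contraNneq sb0 => <-.
    by case: (ne1 _ _ _ tMs (hB _ _ hb0 hs sMb)).
  have := subset_leq_card sub; rewrite cardsU1; have := M1 b0.
  by move: big; clear; case: (b0 \notin M b0); lia.
have hall v : h v == beta.
  by move/existsPn: allB => H; move: (H v); rewrite negbK.
have mut s t : t \in M s -> s \in M t.
  move=> tMs; have ts : t != s by apply/eqP => E0; subst; fin.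
  have := esy s t; rewrite (eM ts) (eM (w := t) (z := s)) 1?eq_sym // tMs.
  by apply: xh2; rewrite (eqP (hall s)) (eqP (hall t)).
have [t1 t1T] : exists t, t \in TT by apply/card_gt0P; move: big; clear; lia.
case/bigcupP: (t1T) => s1 _ t1M.
have [t2] : exists t, t \in TT :\: [set t1; s1].
  apply/card_gt0P; apply: leq_trans (cardsD_ge _ _); have := cards2_le t1 s1.
  by move: big; clear; lia.
rewrite in_setD => /andP [t2n t2T]; case/bigcupP: (t2T) => s2 _ t2M.
have [t3] : exists t, t \in TT :\: ([set t1; s1] :|: [set t2; s2]).
  apply/card_gt0P; apply: leq_trans (cardsD_ge _ _); have := cards2_le t1 s1.
  have := cards2_le t2 s2; have := cardU_le [set t1; s1] [set t2; s2].
  by move: big; clear; lia.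
rewrite in_setD => /andP [t3n t3T]; case/bigcupP: (t3T) => s3 _ t3M.
have s1M := mut _ _ t1M; have s2M := mut _ _ t2M; have s3M := mut _ _ t3M.
move: t2n t3n; rewrite !inE !negb_or => /andP [t21 t2s1] /andP [/andP [t31 t3s1] /andP [t32 t3s2]].
have s21 : s2 != s1 by apply/eqP => E0; subst; apply: (ne1 _ _ _ t1M t2M); rewrite eq_sym.
have s2t1 : s2 != t1 by apply/eqP => E0; subst; apply: (ne1 _ _ _ s1M t2M); rewrite eq_sym.
have s31 : s3 != s1 by apply/eqP => E0; subst; apply: (ne1 _ _ _ t1M t3M); rewrite eq_sym.
have s32 : s3 != s2 by apply/eqP => E0; subst; apply: (ne1 _ _ _ t2M t3M); rewrite eq_sym.
have s3t1 : s3 != t1 by apply/eqP => E0; subst; apply: (ne1 _ _ _ s1M t3M); rewrite eq_sym.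
have s3t2 : s3 != t2 by apply/eqP => E0; subst; apply: (ne1 _ _ _ s2M t3M); rewrite eq_sym.
have t1s1 : t1 != s1 by apply/eqP => E0; subst; fin.
have t2s2 : t2 != s2 by apply/eqP => E0; subst; fin.
have t3s3 : t3 != s3 by apply/eqP => E0; subst; fin.
apply: (DT (W := [set s1; s2; s3]) (D := [set t1; t2; t3])
  (E := ~: ([set s1; s2; s3] :|: M s1 :|: M s2 :|: M s3))).
- by apply: card3; rewrite // eq_sym.
- apply: leq_trans n6 (cardC_ge _); apply: leq_trans (card4U _ _ _ _) _.
  have := M1 s1; have := M1 s2; have := M1 s3.
  have : #|[set s1; s2; s3]| <= 3 by apply: leq_trans (card3U _ _ _) _; rewrite !cards1.
  by clear; lia.
- move=> x; rewrite !inE => H1 H2; dest; fin.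
- by move=> x; rewrite !inE => H1 H2; dest; fin.
- move=> d; rewrite !inE => H; dest; [exists s1|exists s2|exists s3]; by rewrite ?inE ?eqxx ?orbT.
- by move=> z w; rewrite !inE => H1 H2; dest; apply: contra H1 => ->; rewrite ?orbT.
Qed.


Lemma core : config e \/ #|TT| <= 4.
Proof.
case: (leqP #|TT| 4) => [small|big]; [by right|left].
case: (boolP [exists b, #|M b| == 2]) => [/existsP [b /eqP Hb]|none]; first exact: stepA Hb big.
have M1 w : #|M w| <= 1.
  move/existsPn: none => /(_ w) H; have := Mcard w; move: H.
  by case: #|M w| => [|[|[|]]].
case: (leqP 5 #|[set v | h v == true]|) => H5; first exact: (stepB M1 H5 big).
apply: (stepB (beta := false) M1 _ big).
have -> : [set v | h v == false] = ~: [set v | h v == true].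
  by apply/setP => v; rewrite !inE; case: (h v).
by have := cardsC [set v | h v == true]; move: H5 n9; clear; lia.
Qed.

End Core.



Theorem theorem14 (T : finType) (e : rel T) :
  simple_graph e -> connected_graph e ->
  9 <= #|T| ->
  (twin_number e * 2 <= #|T|)%N ->
  (partition_dim e <= #|T| - 3)%N.
Proof.
move=> [esy eirr] _ n9 tw.
have n2 : 2 <= #|T| by move: n9; clear; lia.
apply: (config_pdim esy n2).
case: (boolP [exists w, (2 < #|nbhd e w|) && (2 < #|~: (w |: nbhd e w)|)]).
  case/existsP => w /andP [c1 c2].
  have [x1 [x2 [x3 [[X1 X2 X3] [n12 n23 n31]]]]] := card_gt2P c1.
  have [y1 [y2 [y3 [[Y1 Y2 Y3] [m12 m23 m31]]]]] := card_gt2P c2.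
  move: X1 X2 X3 Y1 Y2 Y3; rewrite !inE !negb_or => X1 X2 X3.
  move=> /andP [Y1w Y1] /andP [Y2w Y2] /andP [Y3w Y3].
  exists x1, y1, x2, y2, x3, y3, w, w, w.
  have xy x y : e w x -> ~~ e w y -> x != y by move=> H1 H2; apply: contraNneq H2 => <-.
  have wx x : e w x -> w != x by move=> H; apply: contraTneq H => <-; rewrite eirr.
  split; [|split; [split|split]]; rewrite ?X1 ?X2 ?X3 ?(negbTE Y1) ?(negbTE Y2) ?(negbTE Y3) //.
  - rewrite /= !inE !negb_or !andbT -?andbA; repeat (apply/andP; split);
    first [done | by rewrite eq_sym | by apply: xy | by rewrite eq_sym; apply: xy].
  all: try (rewrite !inE !negb_or -?andbA; repeat (apply/andP; split);
    first [by apply: wx | done | by rewrite eq_sym]).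
move=> none.
pose M w := if #|nbhd e w| <= 2 then nbhd e w else ~: (w |: nbhd e w).
pose h w := ~~ (#|nbhd e w| <= 2).
have Mirr w : w \notin M w by rewrite /M; case: ifP => _; rewrite !inE ?eirr ?eqxx.
have Mcard w : #|M w| <= 2.
  rewrite /M; case: ifP => // H; move/existsPn: none => /(_ w).
  have H' : 2 < #|nbhd e w| by rewrite ltnNge H.
  by rewrite H' /= -leqNgt.
have eM w z : z != w -> e w z = (z \in M w) (+) h w.
  move=> zw; rewrite /M /h; case: ifP => _ /=; rewrite !inE ?addbF ?addbT ?(negbTE zw) //=.
  by rewrite negbK.
case: (core esy Mirr Mcard eM n9) => // small.
have [u Hu] := twins_big esy eirr eM n9 small.
have := @leq_bigmax T (fun u => #|twin_class e u|) u; rewrite -/(twin_number e).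
by move: Hu tw n9; clear; lia.
Qed.
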